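(* For the dynamical network $N=F\circ T$, let $L=\max_{i\in\mathcal{I}}L_i$. If $L\rho(\Lambda)<1$, then $N$ has a globally attracting fixed point; that is, the interaction $F$ stabilizes the local systems $(T,X)$ if $L\ge 1$, and maintains their stability if $L<1$.
   Context: Let $\mathcal{I}=\{1,\dots,n\}$. For each $i\in\mathcal{I}$ let $(X_i,d)$ be a compact metric space and $T_i:X_i\to X_i$ with $L_i=\sup_{x_i\ne y_i}\frac{d(T_i(x_i),T_i(y_i))}{d(x_i,y_i)}<\infty$. $X=\prod_iX_i$ with $d_{\max}(x,y)=\max_id(x_i,y_i)$, and $T$ the product map $T(x)_i=T_i(x_i)$. A map $F:X\to X$ is an interaction if for every $j$ there are a nonempty $\mathcal{I}_j\subseteq\mathcal{I}$, a continuous $F_j:\prod_{i\in\mathcal{I}_j}X_i\to X_j$ with $F(x)_j=F_j(\{x_i\}_{i\in\mathcal{I}_j})$, and constants $\Lambda_{ij}\ge0$ with $d(F_j(\{x_i\}),F_j(\{y_i\}))\le\sum_{i\in\mathcal{I}_j}\Lambda_{ij}d(x_i,y_i)$; $\Lambda_{ij}=0$ for $i\notin\mathcal{I}_j$; $\Lambda=(\Lambda_{ij})$. The dynamical network is $N=F\circ T$. A globally attracting fixed point is a point $\tilde x\in X$ with $N^k(y)\to\tilde x$ for all $y\in X$. $F$ stabilizes $(T,X)$ if $\max_iL_i\ge1$ and $N$ has a globally attracting fixed point; $F$ maintains the stability of $(T,X)$ if $\max_iL_i<1$ and $N$ has a globally attracting fixed point. $\rho$ denotes spectral radius. *)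

(* Defs.v *)
From HB Require Import structures.
From mathcomp Require Import all_boot all_order all_algebra.
From mathcomp Require Import all_classical all_reals all_analysis.
From mathcomp Require Import complex.

Set Implicit Arguments.
Unset Strict Implicit.
Unset Printing Implicit Defensive.

Import Order.TTheory GRing.Theory Num.Theory.
Import numFieldTopology.Exports.
Local Open Scope classical_set_scope.
Local Open Scope ring_scope.

Definition lip_ratios {R : realType} (X : metricType R) (f : X -> X) : set R :=
  [set r | exists x y : X, x <> y /\ r = mdist (f x) (f y) / mdist x y].

(* L_f = sup_{x <> y} d(f x, f y) / d(x, y)  (meaningful when finite). *)
Definition lip_const {R : realType} (X : metricType R) (f : X -> X) : R :=
  sup (lip_ratios f).

Definition dmax {R : realType} {n : nat} (X : 'I_n -> metricType R)
  (x y : forall i, X i) : R :=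
  \big[Num.max/0]_(i < n) mdist (x i) (y i).

Definition prod_map {R : realType} {n : nat} (X : 'I_n -> metricType R)
  (T : forall i, X i -> X i) (x : forall i, X i) : forall i, X i :=
  fun i => T i (x i).

Definition restrict {R : realType} {n : nat} (X : 'I_n -> metricType R)
  (J : {set 'I_n}) (x : forall i, X i) :
  prod_topology (fun k : {i : 'I_n | i \in J} => X (sval k)) :=
  fun k => x (sval k).

Definition is_interaction {R : realType} {n : nat} (X : 'I_n -> metricType R)
  (F : (forall i, X i) -> (forall i, X i)) (Lam : 'M[R]_n) : Prop :=
  exists (I : 'I_n -> {set 'I_n})
         (Fj : forall j : 'I_n,
            prod_topology (fun k : {i : 'I_n | i \in I j} => X (sval k)) -> X j),
    forall j : 'I_n,
      I j != finset.set0 /\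
      continuous (Fj j) /\
      (forall x, F x j = Fj j (@restrict R n X (I j) x)) /\
      (forall i, 0 <= Lam i j) /\
      (forall i, i \notin I j -> Lam i j = 0) /\
      (forall x y : forall i, X i,
             mdist (F x j) (F y j) <=
             \sum_(i in I j) Lam i j * mdist (x i) (y i)).

Definition spectral_radius {R : realType} {n : nat} (A : 'M[R]_n) : R :=
  sup [set Normc.normc z | z in [set z : R[i] |
         eigenvalue (map_mx (fun r => (r%:C)%C) A) z]].

Definition has_global_attracting_fixed_point {R : realType} {n : nat}
  (X : 'I_n -> metricType R) (N : (forall i, X i) -> (forall i, X i)) : Prop :=
  exists xt : forall i, X i,
    N xt = xt /\
    forall y : forall i, X i,
      (fun k : nat => dmax (iter k N y) xt) @ \oo --> (0 : R).

Arguments is_interaction {R n} X F Lam.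
Arguments has_global_attracting_fixed_point {R n} X N.
Arguments prod_map {R n} X T x i.

(* Main.v *)
Require Import Defs.
From HB Require Import structures.
From mathcomp Require Import all_boot all_order all_algebra.
From mathcomp Require Import all_classical all_reals all_analysis.
From mathcomp Require Import complex spectral mxred.
From mathcomp Require Import ring lra.

Set Implicit Arguments.
Unset Strict Implicit.
Unset Printing Implicit Defensive.

Import Order.TTheory GRing.Theory Num.Theory.
Import numFieldTopology.Exports.
Local Open Scope classical_set_scope.
Local Open Scope ring_scope.

Section PartA.
Variable R : rcfType.
Local Notation C := (R[i]).
Local Notation nc := (@Normc.normc R).

Lemma nc_ge0 (z : C) : 0 <= nc z.
Proof. by case: z => a b; rewrite /Normc.normc sqrtr_ge0. Qed.

Lemma nc_real (r : R) : nc (r%:C)%C = `|r|.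
Proof. by rewrite /Normc.normc /= expr0n /= addr0 sqrtr_sqr. Qed.

Lemma nc_sum (I : Type) (s : seq I) (P : pred I) (F : I -> C) :
  nc (\sum_(i <- s | P i) F i) <= \sum_(i <- s | P i) nc (F i).
Proof.
elim/big_rec2: _ => [|i y1 y2 _ H]; first by rewrite Normc.normc0.
exact: le_trans (le_normcD _ _) (lerD (lexx _) H).
Qed.

Lemma ler_sum_term (I : finType) (F : I -> R) j :
  (forall i, 0 <= F i) -> F j <= \sum_i F i.
Proof. by move=> F0; rewrite (bigD1 j) //= lerDl sumr_ge0. Qed.

Definition vmax (n : nat) (f : 'I_n -> R) : R := \big[Num.max/0%R]_(i < n) f i.

Lemma vmax_ge0 n (f : 'I_n -> R) : 0 <= vmax f.
Proof. exact: bigmax_ge_id. Qed.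

Lemma vmax_ge n (f : 'I_n -> R) i : f i <= vmax f.
Proof. exact: le_bigmax. Qed.

Lemma vmax_le n (f : 'I_n -> R) m : 0 <= m -> (forall i, f i <= m) -> vmax f <= m.
Proof. by move=> m0 H; apply: bigmax_le. Qed.

Lemma diag_eig n (Tm : 'M[C]_n) i : is_trig_mx Tm -> eigenvalue Tm (Tm i i).
Proof.
move=> Ht; rewrite eigenvalue_root_char char_poly_trig //.
rewrite -(big_map (fun i : 'I_n => Tm i i) xpredT (fun a => 'X - a%:P)).
by rewrite root_prod_XsubC; apply: map_f; rewrite mem_index_enum.
Qed.


Lemma sum_le_const n (P : pred 'I_n) (F : 'I_n -> R) c :
  0 <= c -> (forall i, P i -> F i <= c) -> \sum_(i | P i) F i <= c * n%:R.
Proof.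
move=> c0 H; rewrite big_mkcond /=.
apply: le_trans (_ : \sum_(i < n) c <= _).
  by apply: ler_sum => i _; case: ifP => Pi; [exact: H|].
by rewrite sumr_const card_ord mulr_natr.
Qed.

Lemma sum2_ge_term n (F : 'I_n -> 'I_n -> R) i j :
  (forall i j, 0 <= F i j) -> F i j <= \sum_i \sum_j F i j.
Proof.
move=> F0; apply: (le_trans (@ler_sum_term _ (F i) j (F0 i))).
apply: (@ler_sum_term _ (fun i => \sum_j F i j) i) => i'.
by apply: sumr_ge0 => ? _.
Qed.

Lemma lemA n (A : 'M[R]_n) :
  (forall z : C, eigenvalue (map_mx (fun r => (r%:C)%C) A) z -> nc z < 1) ->
  exists c q : R, [/\ 0 <= c, 0 <= q, q < 1 &
    forall k (x : 'rV[R]_n) j, `|(iter k (fun y => y *m A) x) 0 j| <=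
       c * q ^+ k * vmax (fun i => `|x 0 i|)].
Proof.
case: n A => [|n] A Heig.
  by exists 0, 0; split => //; move=> k x [].
set Ac := map_mx (fun r : R => (r%:C)%C) A.
have [P Pu PT] := Schur Ac (ltn0Sn n).
have Pinv : P \in unitmx := unitarymx_unit Pu.
rewrite /similar_to conjumx // in PT.
set Tm := P *m Ac *m invmx P in PT.
set Q := invmx P.
have QP : Q *m P = 1%:M := mulVmx Pinv.
have PQ : P *m Q = 1%:M := mulmxV Pinv.
have AcE : Ac = Q *m Tm *m P.
  by rewrite /Tm !mulmxA QP mul1mx -mulmxA QP mulmx1.
clearbody Tm.
have diag_lt i : nc (Tm i i) < 1.
  apply: Heig; have /eigenvalueP [v vT v0] := diag_eig i PT.
  apply/eigenvalueP; exists (v *m P).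
    by rewrite -/Ac AcE !mulmxA -(mulmxA v P Q) PQ mulmx1 vT scalemxAl.
  apply: contra v0 => /eqP vP0; apply/eqP.
  by rewrite -(mulmx1 v) -PQ mulmxA vP0 mul0mx.
pose r := vmax (fun i => nc (Tm i i)).
have r0 : 0 <= r := vmax_ge0 _.
have r1 : r < 1 by apply: bigmax_lt => // i _; exact: diag_lt.
pose M := \sum_i \sum_j nc (Tm i j).
have TM i j : nc (Tm i j) <= M by apply: sum2_ge_term => ? ?; exact: nc_ge0.
have M0 : 0 <= M := le_trans (nc_ge0 _) (TM ord0 ord0).
pose N1 : R := n.+1%:R.
have N10 : 0 <= N1 by [].
pose eps := Num.min 1 ((1 - r) / (2 * (N1 * M + 1))).
have NM1 : 0 < N1 * M + 1 by rewrite ltr_wpDl ?mulr_ge0.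
have eps0 : 0 < eps.
  by rewrite lt_min ltr01 /= divr_gt0 ?subr_gt0 ?mulr_gt0.
have eps1 : eps <= 1 by rewrite ge_min lexx.
have epsM : eps * (N1 * M) <= (1 - r) / 2.
  have e2 : eps <= (1 - r) / (2 * (N1 * M + 1)) by rewrite ge_min lexx orbT.
  apply: le_trans (_ : eps * (N1 * M + 1) <= _).
    by apply: ler_wpM2l; [exact: ltW | rewrite lerDl].
  apply: le_trans (ler_wpM2r (ltW NM1) e2) _.
  rewrite le_eqVlt; apply/orP; left; apply/eqP.
  by rewrite invfM mulrA divfK // lt0r_neq0.
pose q := (1 + r) / 2.
have q0 : 0 <= q by rewrite /q divr_ge0 // addr_ge0.
have q1 : q < 1 by rewrite /q ltr_pdivrMr // mul1r; lra.
pose cw (i : 'I_n.+1) := (eps ^+ i)^-1.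
have cw1 i : 1 <= cw i.
  by rewrite /cw invf_ge1 ?exprn_gt0 // exprn_ile1 // ltW.
have cw0 i : 0 <= cw i := le_trans ler01 (cw1 i).
pose W (y : 'rV[C]_n.+1) := vmax (fun i => cw i * nc (y 0 i)).
have W0 y : 0 <= W y := vmax_ge0 _.
have Wge (y : 'rV[C]_n.+1) i : cw i * nc (y 0 i) <= W y := vmax_ge (fun i => cw i * nc (y 0 i)) i.
have step y : W (y *m Tm) <= q * W y.
  apply: vmax_le; first by rewrite mulr_ge0.
  move=> j; rewrite mxE.
  apply: le_trans (ler_wpM2l (cw0 j) (nc_sum _ _ _)) _.
  rewrite mulr_sumr (bigD1 j) //=.
  have -> : q * W y = r * W y + (1 - r) / 2 * W y by rewrite /q; field.
  apply: lerD.
    rewrite Normc.normcM mulrA mulrC.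
    apply: ler_pM => //; first exact: nc_ge0.
      by rewrite mulr_ge0 // nc_ge0.
    exact: (vmax_ge (fun i => nc (Tm i i)) j).
  apply: le_trans (_ : \sum_(i | i != j) eps * M * W y <= _).
    apply: ler_sum => i ij.
    have epsMW : 0 <= eps * M * W y by rewrite !mulr_ge0 // ltW.
    case: (ltngtP i j) => [ilt|igt|ieq].
    - by move/is_trig_mxP: PT => -> //; rewrite mulr0 Normc.normc0 mulr0.
    - rewrite Normc.normcM mulrA.
      have -> : cw j = eps ^+ (i - j) * cw i.
        rewrite /cw -{2}(subnKC (ltnW igt)) exprD invfM mulrCA divff ?mulr1 //.
        by rewrite expf_neq0 // gt_eqF.
      rewrite -mulrA [eps * M]mulrC -!mulrA [M * _]mulrC !mulrA.
      apply: ler_pM; first by rewrite !mulr_ge0 ?nc_ge0 // exprn_ge0 // ltW.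
          exact: nc_ge0.
        rewrite -mulrA; apply: ler_pM => //; first by rewrite exprn_ge0 // ltW.
          by rewrite mulr_ge0 // nc_ge0.
        case: (i - j)%N (subn_gt0 j i) => [|k _]; first by rewrite igt.
        by rewrite exprS; apply: ler_piMr; [exact: ltW | exact: exprn_ile1 (ltW eps0) eps1].
      exact: TM.
    - by move/val_inj: ieq ij => ->; rewrite eqxx.
  have SS : \sum_(i | i != j) eps * M * W y <= eps * M * W y * N1.
    by apply: sum_le_const => //; rewrite !mulr_ge0 // ltW.
  apply: le_trans SS _.
  have -> : eps * M * W y * N1 = eps * (N1 * M) * W y by ring.
  exact: ler_wpM2r.
have stepk k y : W (iter k (fun z => z *m Tm) y) <= q ^+ k * W y.
  elim: k => [|k IH]; first by rewrite expr0 mul1r.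
  rewrite iterS exprS -mulrA.
  exact: le_trans (step _) (ler_wpM2l q0 IH).
have rel k (x : 'rV[R]_n.+1) :
    map_mx (fun r => (r%:C)%C) (iter k (fun y => y *m A) x) =
    iter k (fun z => z *m Tm) (map_mx (fun r => (r%:C)%C) x *m Q) *m P.
  elim: k => [|k IH]; first by rewrite /= -mulmxA QP mulmx1.
  rewrite iterS map_mxM IH -/Ac AcE iterS.
  by rewrite !mulmxA -(mulmxA _ P Q) PQ mulmx1.
pose MP := \sum_i \sum_j nc (P i j).
have PM i j : nc (P i j) <= MP by apply: sum2_ge_term => ? ?; exact: nc_ge0.
have MP0 : 0 <= MP := le_trans (nc_ge0 _) (PM ord0 ord0).
pose MQ := \sum_i \sum_j nc (Q i j).
have QM i j : nc (Q i j) <= MQ by apply: sum2_ge_term => ? ?; exact: nc_ge0.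
have MQ0 : 0 <= MQ := le_trans (nc_ge0 _) (QM ord0 ord0).
pose SC := \sum_i cw i.
have SCge i : cw i <= SC by apply: ler_sum_term.
have SC0 : 0 <= SC := le_trans (cw0 ord0) (SCge ord0).
have outb (w : 'rV[C]_n.+1) j : nc ((w *m P) 0 j) <= W w * MP * N1.
  rewrite mxE; apply: le_trans (nc_sum _ _ _) _.
  apply: sum_le_const => [|i _]; first by rewrite mulr_ge0.
  rewrite Normc.normcM; apply: ler_pM; [exact: nc_ge0|exact: nc_ge0| |exact: PM].
  apply: le_trans (Wge w i).
  by rewrite ler_peMl // nc_ge0.
have inb (x : 'rV[R]_n.+1) :
    W (map_mx (fun r => (r%:C)%C) x *m Q) <= SC * (vmax (fun i => `|x 0 i|) * MQ * N1).
  apply: vmax_le => [|j]; first by rewrite !mulr_ge0 // vmax_ge0.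
  apply: ler_pM; [exact: cw0|exact: nc_ge0|exact: SCge|].
  rewrite mxE; apply: le_trans (nc_sum _ _ _) _.
  apply: sum_le_const => [|i _]; first by rewrite !mulr_ge0 // vmax_ge0.
  rewrite Normc.normcM mxE nc_real; apply: ler_pM; [exact: normr_ge0|exact: nc_ge0| |exact: QM].
  exact: (vmax_ge (fun i => `|x 0 i|)).
exists (MP * N1 * (SC * (MQ * N1))), q; split => //.
  by rewrite !mulr_ge0.
move=> k x j.
rewrite -nc_real.
have -> : ((iter k (fun y => y *m A) x) 0 j)%:C%C =
    (map_mx (fun r => (r%:C)%C) (iter k (fun y => y *m A) x)) 0 j by rewrite mxE.
rewrite rel; apply: le_trans (outb _ _) _.
apply: le_trans (_ : q ^+ k * W (map_mx (fun r => (r%:C)%C) x *m Q) * MP * N1 <= _).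
  by rewrite ler_wpM2r // ler_wpM2r.
apply: le_trans (_ : q ^+ k * (SC * (vmax (fun i => `|x 0 i|) * MQ * N1)) * MP * N1 <= _).
  rewrite ler_wpM2r // ler_wpM2r //; apply: ler_wpM2l; [exact: exprn_ge0|exact: inb].
rewrite le_eqVlt; apply/orP; left; apply/eqP; ring.
Qed.

End PartA.

Section PartB.
Variable R : realType.
Local Notation C := (R[i]).
Local Notation nc := (@Normc.normc R).

Lemma gersh n (M : 'M[C]_n) z : eigenvalue M z -> nc z <= \sum_i \sum_j nc (M i j).
Proof.
move=> /eigenvalueP [v vM v0].
have [j1 vj1] : exists j, v 0 j != 0.
  case: (pickP (fun j => v 0 j != 0)) => [j Hj|H]; first by exists j.
  case/negP: v0; apply/eqP/matrixP => i j; rewrite (ord1 i) !mxE.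
  by move: (H j) => /= /negbFE /eqP.
case: (@arg_maxP _ _ _ j1 predT (fun j => nc (v 0 j)) isT) => j0 _ Hj0.
have m0 : 0 < nc (v 0 j0).
  apply: lt_le_trans (Hj0 j1 isT); rewrite lt0r nc_ge0 andbT.
  by apply: contra vj1 => /eqP /Normc.eq0_normc ->.
rewrite -(ler_pM2r m0) -Normc.normcM.
have -> : z * v 0 j0 = (v *m M) 0 j0 by rewrite vM !mxE.
rewrite mxE; apply: le_trans (nc_sum _ _ _) _.
apply: le_trans (_ : \sum_i nc (v 0 j0) * nc (M i j0) <= _).
  apply: ler_sum => i _; rewrite Normc.normcM ler_wpM2r ?nc_ge0 //.
  exact: Hj0.
rewrite -mulr_sumr mulrC ler_wpM2r ?nc_ge0 //.
apply: ler_sum => i _.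
by apply: (@ler_sum_term _ _ (fun j => nc (M i j)) j0) => ?; exact: nc_ge0.
Qed.

Lemma eig_scaled n (Lam : 'M[R]_n) (L : R) : 0 <= L -> L * spectral_radius Lam < 1 ->
  forall z : C, eigenvalue (map_mx (fun r => (r%:C)%C) (\matrix_(i, j) (L * Lam i j))) z ->
  nc z < 1.
Proof.
move=> L0 LS z.
have -> : map_mx (fun r => (r%:C)%C) (\matrix_(i, j) (L * Lam i j)) =
    (L%:C)%C *: map_mx (fun r => (r%:C)%C) Lam.
  by apply/matrixP => i j; rewrite !mxE rmorphM.
move=> /eigenvalueP [v vB v0].
have [L00|Lne0] := eqVneq L 0.
  move: vB; rewrite L00 scale0r mulmx0 => /esym /eqP.
  rewrite scaler_eq0 (negbTE v0) orbF => /eqP ->.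
  by rewrite Normc.normc0.
have LC0 : (L%:C)%C != 0 by rewrite eq_complex /= eqxx andbT.
have ev : eigenvalue (map_mx (fun r => (r%:C)%C) Lam) (z / (L%:C)%C).
  apply/eigenvalueP; exists v => //.
  by apply: (scalerI LC0); rewrite scalemxAr vB scalerA mulrC divfK.
have Hub : has_ubound [set Normc.normc z | z in [set z : R[i] |
         eigenvalue (map_mx (fun r => (r%:C)%C) Lam) z]].
  exists (\sum_i \sum_j nc (map_mx (fun r => (r%:C)%C) Lam i j)).
  by move=> _ [w /= wE <-]; exact: gersh.
have Hle : nc (z / (L%:C)%C) <= spectral_radius Lam.
  by apply: ub_le_sup => //; exists (z / (L%:C)%C).
have -> : z = (L%:C)%C * (z / (L%:C)%C) by rewrite mulrC divfK.
rewrite Normc.normcM nc_real ger0_norm //.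
exact: le_lt_trans (ler_wpM2l L0 Hle) LS.
Qed.

Lemma lipT (X : metricType R) (f : X -> X) :
  has_ubound (lip_ratios f) -> forall x y, mdist (f x) (f y) <= lip_const f * mdist x y.
Proof.
move=> Hub x y; have [->|xy] := eqVneq x y; first by rewrite !mdistxx mulr0.
have d0 : 0 < mdist x y by rewrite mdist_gt0.
rewrite -ler_pdivrMr //; apply: ub_le_sup => //.
by exists x, y; split => //; apply/eqP.
Qed.

Lemma geo_small (q : R) : 0 <= q -> q < 1 ->
  forall e, 0 < e -> exists m, forall k, (m <= k)%N -> q ^+ k < e.
Proof.
move=> q0 q1 e e0.
have qn : `|q| < 1 by rewrite ger0_norm.
have /cvgrPdist_lt /(_ e e0) [m _ Hm] := @cvg_expr R q qn.
exists m => k /Hm /=.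
by rewrite sub0r normrN ger0_norm // exprn_ge0.
Qed.

Lemma ev_all n (P : 'I_n -> nat -> Prop) :
  (forall i, exists m, forall k, (m <= k)%N -> P i k) ->
  exists m, forall k, (m <= k)%N -> forall i, P i k.
Proof.
move=> H; have [g Hg] := choice H.
exists (\max_i g i) => k Hk i; apply: Hg.
exact: leq_trans (leq_bigmax i) Hk.
Qed.

End PartB.

Lemma compact_cauchy_ex {T : uniformType} (F : set_system T) {PF : ProperFilter F} :
  cauchy F -> compact [set: T] -> exists x : T, F --> x.
Proof.
move=> cf /(_ F PF filterT) [x [_ clFx]]; exists x.
apply/cvg_entourageP => E entE.
have := cf (split_ent E) (entourage_split_ent entE).
move=> [] [D1 D2]/= /[!nbhs_simpl] -[FD1 FD2 D1D2E].
have : nbhs x (xsection (split_ent E) x) by exact: nbhs_entourage.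
move=> /(clFx _ (xsection (split_ent E) x) FD1)[z [Dz /xsectionP Exz]].
by near=> t; apply/(entourage_split z entE Exz)/D1D2E; split => //; near: t.
Unshelve. all: by end_near. Qed.

Theorem corollary1 (R : realType) (n : nat) (X : 'I_n -> metricType R)
  (T : forall i : 'I_n, X i -> X i)
  (F : (forall i, X i) -> (forall i, X i)) (Lam : 'M[R]_n) :
  (forall i, compact [set: X i]) ->
  (forall i, exists x : X i, True) ->
  (forall i, has_ubound (lip_ratios (T i))) ->
  is_interaction X F Lam ->
  (\big[Num.max/0]_(i < n) lip_const (T i)) * spectral_radius Lam < 1 ->
  has_global_attracting_fixed_point X (F \o prod_map X T).
Proof.
move=> Hcomp Hpt Hub [I [Fj HF]] HLS.
set L := \big[Num.max/0]_(i < n) lip_const (T i) in HLS.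
have L0 : 0 <= L by apply: bigmax_ge_id.
have LT i x y : mdist (T i x) (T i y) <= L * mdist x y.
  apply: le_trans (lipT (Hub i) x y) _.
  apply: ler_wpM2r; first exact: mdist_ge0.
  exact: (le_bigmax 0 (fun i => lip_const (T i)) i).
pose Bm : 'M[R]_n := \matrix_(i, j) (L * Lam i j).
have Lam0 i j : 0 <= Lam i j by have [_ [_ [_ [H _]]]] := HF j; exact: H.
have Bm0 i j : 0 <= Bm i j by rewrite mxE mulr_ge0.
have [c [q [c0 q0 q1 Hcq]]] := lemA (eig_scaled L0 HLS).
pose N := F \o prod_map X T.
pose u (x y : forall i, X i) : 'rV[R]_n := \row_i mdist (x i) (y i).
have K1 x y j : mdist (N x j) (N y j) <= (u x y *m Bm) 0 j.
  have [_ [_ [_ [_ [LamI Hd]]]]] := HF j.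
  apply: le_trans (Hd _ _) _.
  rewrite mxE big_mkcond /=.
  apply: ler_sum => i _; rewrite !mxE.
  case: ifP => iI.
    apply: le_trans (ler_wpM2l (Lam0 i j) (LT i (x i) (y i))) _.
    by rewrite le_eqVlt; apply/orP; left; apply/eqP; ring.
  by rewrite mulr_ge0 ?mdist_ge0 ?mulr_ge0.
have K2 k x y j : mdist (iter k N x j) (iter k N y j) <=
    (iter k (fun v => v *m Bm) (u x y)) 0 j.
  elim: k j => [|k IH] j; first by rewrite /= mxE.
  rewrite !iterS; apply: le_trans (K1 _ _ j) _.
  rewrite !mxE; apply: ler_sum => i _; rewrite mxE.
  by apply: ler_wpM2r => //; exact: IH.
have K3 k x y j : mdist (iter k N x j) (iter k N y j) <= c * q ^+ k * dmax x y.
  apply: le_trans (K2 k x y j) _.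
  apply: le_trans (ler_norm _) _.
  apply: le_trans (Hcq k (u x y) j) _.
  rewrite /vmax /dmax; apply: ler_wpM2l; first by rewrite mulr_ge0 // exprn_ge0.
  rewrite le_eqVlt; apply/orP; left; apply/eqP; apply: eq_bigr => i _.
  by rewrite mxE ger0_norm // mdist_ge0.
have dmax0 x y : 0 <= dmax x y by apply: bigmax_ge_id.
have K4 k x y : dmax (iter k N x) (iter k N y) <= c * q ^+ k * dmax x y.
  apply: bigmax_le => [|j _]; last exact: K3.
  by rewrite !mulr_ge0 ?exprn_ge0 ?dmax0.
have [y0 _] : exists y0 : forall i, X i, True.
  by exists (fun i => projT1 (cid (Hpt i))).
pose s k := iter k N y0.
pose d0 := dmax y0 (N y0).
pose K := c * d0 / (1 - q).
have K0 : 0 <= K by rewrite divr_ge0 ?mulr_ge0 ?subr_ge0 ?dmax0 // ltW.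
have geo p : \sum_(t < p) q ^+ t <= (1 - q)^-1.
  have E : (\sum_(t < p) q ^+ t) * (1 - q) = 1 - q ^+ p.
    elim: p => [|p IH]; first by rewrite big_ord0 mul0r expr0 subrr.
    by rewrite big_ord_recr /= mulrDl IH exprS; ring.
  rewrite -[(1 - q)^-1]mul1r ler_pdivlMr ?subr_gt0 // E.
  by have := exprn_ge0 p q0; lra.
have cau m p i : mdist (s m i) (s (m + p)%N i) <= K * q ^+ m.
  have H1 t : mdist (s t i) (s t.+1 i) <= c * d0 * q ^+ t.
    rewrite /s iterSr.
    by apply: le_trans (K3 t y0 (N y0) i) _; rewrite mulrAC.
  have : mdist (s m i) (s (m + p)%N i) <= c * d0 * q ^+ m * \sum_(t < p) q ^+ t.
    elim: p => [|p IH]; first by rewrite addn0 mdistxx big_ord0 mulr0.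
    apply: le_trans (metric_triangle _ (s (m + p)%N i) _) _.
    rewrite big_ord_recr /= mulrDr addnS.
    apply: lerD => //; apply: le_trans (H1 _) _.
    by rewrite exprD mulrA.
  move/le_trans; apply.
  have -> : K * q ^+ m = c * d0 * q ^+ m * (1 - q)^-1 by rewrite /K; ring.
  by apply: ler_wpM2l => //; rewrite !mulr_ge0 ?exprn_ge0 ?dmax0.
have Hlim i : exists xi : X i, (fun k => s k i) @ \oo --> xi.
  apply: compact_cauchy_ex (Hcomp i).
  apply: cauchy_exP => e e0.
  have e1 : 0 < e / (K + 1) by rewrite divr_gt0 // ltr_wpDl.
  have [m Hm] := geo_small q0 q1 e1.
  exists (s m i); exists m => // k /= mk.
  rewrite ballEmdist /= -(subnKC mk).
  apply: le_lt_trans (cau m (k - m)%N i) _.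
  have := Hm m (leqnn m); rewrite ltr_pdivlMr ?ltr_wpDl //.
  apply: le_lt_trans; rewrite [K * _]mulrC; apply: ler_wpM2l; first exact: exprn_ge0.
  by rewrite lerDl.
have [xt Hxt] : exists xt : forall i, X i, forall i, (fun k => s k i) @ \oo --> xt i.
  by exists (fun i => projT1 (cid (Hlim i))) => i; exact: projT2 (cid (Hlim i)).
have conv i e : 0 < e -> exists m, forall k, (m <= k)%N -> mdist (xt i) (s k i) < e.
  move=> e0; have /metricType_numDomainType.cvgrPdist_lt /(_ e e0) [m _ Hm] := Hxt i.
  by exists m => k /Hm.
have convd e : 0 < e -> exists m, forall k, (m <= k)%N -> dmax xt (s k) <= e.
  move=> e0; have [m Hm] := @ev_all n (fun i k => mdist (xt i) (s k i) < e) (fun i => conv i e e0).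
  exists m => k mk; apply: bigmax_le => [|i _]; first exact: ltW.
  exact: ltW (Hm k mk i).
have Hfix : N xt = xt.
  apply: functional_extensionality_dep => i.
  apply: mdist_positivity; apply/eqP; rewrite eq_le mdist_ge0 andbT.
  apply/ler_addgt0Pl => e e0; rewrite addr0.
  have e2 : 0 < e / 2 by rewrite divr_gt0.
  have cq0 : 0 < c * q + 1 by rewrite ltr_wpDl ?mulr_ge0.
  have e3 : 0 < e / 2 / (c * q + 1) by rewrite divr_gt0.
  have [m1 Hm1] := convd _ e3.
  have [m2 Hm2] := conv i _ e2.
  pose k := maxn m1 m2.
  apply: le_trans (metric_triangle _ (s k.+1 i) _) _.
  rewrite (splitr e); apply: lerD.
    have -> : s k.+1 = iter 1 N (s k) by [].
    apply: le_trans (K3 1%N xt (s k) i) _.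
    apply: le_trans (_ : c * q ^+ 1 * (e / 2 / (c * q + 1)) <= _).
      apply: ler_wpM2l; first by rewrite mulr_ge0 ?exprn_ge0.
      by apply: Hm1; rewrite leq_maxl.
    rewrite expr1 mulrA ler_pdivrMr // mulrC.
    by apply: ler_wpM2l; [exact: ltW | rewrite lerDl].
  rewrite metric_sym; apply: ltW; apply: Hm2.
  by apply: leq_trans (leq_maxr m1 m2) (leqnSn _).
exists xt; split => // y.
have iterfix k : iter k N xt = xt by elim: k => [//|k IH]; rewrite iterS IH Hfix.
apply/cvgrPdist_lt => e e0.
pose D := c * dmax y xt.
have D0 : 0 <= D by rewrite mulr_ge0 ?dmax0.
have e1 : 0 < e / (D + 1) by rewrite divr_gt0 // ltr_wpDl.
have [m Hm] := geo_small q0 q1 e1.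
exists m => // k /= mk.
rewrite sub0r normrN ger0_norm ?dmax0 //.
rewrite -[X in dmax _ X](iterfix k).
apply: le_lt_trans (K4 k y xt) _.
have := Hm k mk; rewrite ltr_pdivlMr ?ltr_wpDl //.
apply: le_lt_trans; rewrite mulrAC -/D mulrC; apply: ler_wpM2l; first exact: exprn_ge0.
by rewrite lerDl.
Qed.
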